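(* For the discounted MDP $M_\theta$ and any policy $\pi$, $\mathbb E_\theta[\mathrm{Regret}_\theta(T)]\ge\mathbb E_\theta\big[\sum_{t=1}^TV^*(s_t)-\frac1{1-\gamma}\sum_{t=1}^Tr(s_t,a_t)-\frac{\gamma}{(1-\gamma)^2}\big]$.
   Context: $M_\theta$: two states $x_0,x_1$, actions $\mathcal A=\{-1,1\}^{d-1}$, rewards $r(x_0,a)=0$, $r(x_1,a)=1$, transitions $p(x_1\mid x_0,a)=1/(1+(\delta^{-1}-1)e^{-a^\top\theta})$, $p(x_0\mid x_1,a)=\delta$ (remaining mass on staying), with $\delta=1-\gamma$, discount factor $\gamma\in(0,1)$, and $\theta\in\mathbb R^{d-1}$. A (history-dependent) policy $\pi$ is run from $s_1=x_0$; $\mathbb E_\theta$ is expectation over the resulting trajectory. $V^\pi_t(s)=\mathbb E[\sum_{i\ge0}\gamma^ir(s_{t+i},a_{t+i})\mid s_t=s]$ (given the history), $V^*$ is the optimal discounted value function, and $\mathrm{Regret}_\theta(T)=\sum_{t=1}^TV^*(s_t)-\sum_{t=1}^TV^\pi_t(s_t)$. *)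

(* Defs.v *)
From mathcomp Require Import all_boot all_order all_algebra.
From mathcomp Require Import all_classical all_reals all_analysis.
Set Implicit Arguments. Unset Strict Implicit. Unset Printing Implicit Defensive.
Import Order.TTheory GRing.Theory Num.Theory.
Local Open Scope ring_scope.
Local Open Scope classical_set_scope.

Section MDP.
Variables (R : realType) (n : nat).
(* d - 1 = n; actions A = {-1,1}^n encoded as boolean vectors (true = +1). *)
Definition State := bool.
Definition x0 : State := false.
Definition x1 : State := true.
Definition Action := {ffun 'I_n -> bool}.
Definition sgn (b : bool) : R := if b then 1 else -1.
Definition adot (a : Action) (theta : 'I_n -> R) : R :=
  \sum_(i < n) sgn (a i) * theta i.

Definition reward (s : State) (a : Action) : R := if s then 1 else 0.

Definition trans (gamma : R) (theta : 'I_n -> R) (s : State) (a : Action)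
  (s' : State) : R :=
  let delta := 1 - gamma in
  if s then (if s' then 1 - delta else delta)
  else let p := 1 / (1 + (delta^-1 - 1) * expR (- adot a theta)) in
       (if s' then p else 1 - p).

(* A (possibly randomized) history-dependent policy: given the past
   state-action pairs and the current state, a distribution over actions. *)
Definition policy := seq (State * Action) -> State -> Action -> R.
Definition valid_policy (pi : policy) : Prop :=
  (forall h s a, 0 <= pi h s a) /\ (forall h s, \sum_(a : Action) pi h s a = 1).

(* cont gamma theta pi h s k f : expectation of f (history, state) evaluated
   k steps later, given past history h and current state s. *)
Fixpoint cont (gamma : R) (theta : 'I_n -> R) (pi : policy)
  (h : seq (State * Action)) (s : State) (k : nat)
  (f : seq (State * Action) -> State -> R) {struct k} : R :=
  match k with
  | 0 => f h s
  | k'.+1 => \sum_(a : Action) pi h s a *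
       \sum_(s' : State) trans gamma theta s a s' *
          cont gamma theta pi (rcons h (s, a)) s' k' f
  end.

Definition exp_reward (gamma : R) (theta : 'I_n -> R) (pi : policy)
  (h : seq (State * Action)) (s : State) (i : nat) : R :=
  cont gamma theta pi h s i (fun h' s' => \sum_(a : Action) pi h' s' a * reward s' a).

Definition Vpi (gamma : R) (theta : 'I_n -> R) (pi : policy)
  (h : seq (State * Action)) (s : State) : R :=
  limn (fun N => \sum_(i < N) gamma ^+ i * exp_reward gamma theta pi h s i).

Definition Vstar (gamma : R) (theta : 'I_n -> R) (s : State) : R :=
  sup [set v | exists pi : policy, valid_policy pi /\ v = Vpi gamma theta pi [::] s].

(* expectation of a functional of the first T state-action pairs
   (s_1,a_1),...,(s_T,a_T) of the trajectory started at s_1 = x0 *)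
Definition Etraj (gamma : R) (theta : 'I_n -> R) (pi : policy) (T : nat)
  (F : seq (State * Action) -> R) : R :=
  cont gamma theta pi [::] x0 T (fun h _ => F h).

Definition dflt : State * Action := (x0, [ffun _ => true]).

Definition regret (gamma : R) (theta : 'I_n -> R) (pi : policy) (T : nat)
  (h : seq (State * Action)) : R :=
  \sum_(t < T) Vstar gamma theta (nth dflt h t).1
  - \sum_(t < T) Vpi gamma theta pi (take t h) (nth dflt h t).1.

End MDP.
Arguments reward {R n} s a.
Arguments sgn {R} b.

(* Main.v *)
Require Import Defs.
From mathcomp Require Import all_boot all_order all_algebra.
From mathcomp Require Import all_classical all_reals all_analysis.
From mathcomp Require Import ring lra.
Import Order.TTheory GRing.Theory Num.Theory.
Local Open Scope ring_scope.

Section Aux.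
Variables (R : realType) (n : nat) (gamma : R) (theta : 'I_n -> R) (pi : policy R n).
Hypothesis hg : 0 < gamma < 1.
Hypothesis hpi : valid_policy pi.

Local Notation C := (cont gamma theta pi).

Lemma pi_ge0 h s a : 0 <= pi h s a. Proof. by case: hpi. Qed.
Lemma pi_sum h s : \sum_a pi h s a = 1. Proof. by case: hpi. Qed.

Lemma trans_ge0 s a s' : 0 <= trans gamma theta s a s'.
Proof.
case/andP: hg => g0 g1.
rewrite /trans; case: s; case: s' => /=; try lra.
- set e := expR _.
  have e0 : 0 < e by rewrite expR_gt0.
  have d1 : 1 < (1 - gamma)^-1 by rewrite invf_gt1; lra.
  have hd : 0 < 1 + ((1 - gamma)^-1 - 1) * e.
    have : 0 < ((1 - gamma)^-1 - 1) * e by apply: mulr_gt0; lra.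
    lra.
  by rewrite div1r ltW // invr_gt0.
- set e := expR _.
  have e0 : 0 < e by rewrite expR_gt0.
  have d1 : 1 < (1 - gamma)^-1 by rewrite invf_gt1; lra.
  have hd : 1 <= 1 + ((1 - gamma)^-1 - 1) * e.
    have : 0 < ((1 - gamma)^-1 - 1) * e by apply: mulr_gt0; lra.
    lra.
  rewrite subr_ge0 div1r invf_le1 //; lra.
Qed.

Lemma trans_sum s a : \sum_s' trans gamma theta s a s' = 1.
Proof. rewrite big_bool /trans; case: s => /=; ring. Qed.

Lemma cont_ext_size h s k f g :
  (forall h' s', size h' = (size h + k)%N -> f h' s' = g h' s') ->
  C h s k f = C h s k g.
Proof.
elim: k h s => [|k IH] h s E /=; first by apply: E; rewrite addn0.
apply: eq_bigr => a _; congr (_ * _); apply: eq_bigr => s' _; congr (_ * _).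
apply: IH => h' s'' hs; apply: E; rewrite hs size_rcons addSnnS.
done.
Qed.

Lemma cont_const h s k c : C h s k (fun _ _ => c) = c.
Proof.
elim: k h s => [|k IH] h s //=.
under eq_bigr => a _ do under eq_bigr => s' _ do rewrite IH.
under eq_bigr => a _ do rewrite -big_distrl /= trans_sum mul1r.
by rewrite -big_distrl /= pi_sum mul1r.
Qed.

Lemma cont_add h s k f g :
  C h s k (fun h' s' => f h' s' + g h' s') = C h s k f + C h s k g.
Proof.
elim: k h s => [|k IH] h s //=.
rewrite -big_split /=; apply: eq_bigr => a _.
rewrite -mulrDr -big_split /=; congr (_ * _); apply: eq_bigr => s' _ /=.
by rewrite IH mulrDr.
Qed.

Lemma cont_scale h s k c f :
  C h s k (fun h' s' => c * f h' s') = c * C h s k f.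
Proof.
elim: k h s => [|k IH] h s //=.
rewrite big_distrr /=; apply: eq_bigr => a _.
rewrite [RHS]mulrCA [in RHS]big_distrr /=; congr (_ * _); apply: eq_bigr => s' _.
by rewrite IH mulrCA.
Qed.

Lemma cont_sub h s k f g :
  C h s k (fun h' s' => f h' s' - g h' s') = C h s k f - C h s k g.
Proof.
have -> : (fun h' s' => f h' s' - g h' s') = (fun h' s' => f h' s' + (-1) * g h' s').
  by apply/funext => ?; apply/funext => ?; rewrite mulN1r.
by rewrite cont_add cont_scale mulN1r.
Qed.

Lemma cont_sum h s k K (f : 'I_K -> _) :
  C h s k (fun h' s' => \sum_(i < K) f i h' s') = \sum_(i < K) C h s k (f i).
Proof.
elim: K f => [|K IH] f.
  have -> : (fun h' s' => \sum_(i < 0) f i h' s') = (fun _ _ => 0).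
    by apply/funext => ?; apply/funext => ?; rewrite big_ord0.
  by rewrite cont_const big_ord0.
have -> : (fun h' s' => \sum_(i < K.+1) f i h' s') =
  (fun h' s' => \sum_(i < K) f (widen_ord (leqnSn K) i) h' s' + f ord_max h' s').
  by apply/funext => ?; apply/funext => ?; rewrite big_ord_recr.
by rewrite cont_add big_ord_recr IH.
Qed.

Lemma cont_le h s k f g :
  (forall h' s', f h' s' <= g h' s') -> C h s k f <= C h s k g.
Proof.
elim: k h s => [|k IH] h s E /=; first exact: E.
apply: ler_sum => a _; apply: ler_wpM2l; first exact: pi_ge0.
apply: ler_sum => s' _; apply: ler_wpM2l; first exact: trans_ge0.
exact: IH.
Qed.

Lemma cont_tower h s j k f :
  C h s (j + k) f = C h s j (fun h' s' => C h' s' k f).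
Proof.
elim: j h s => [|j IH] h s //=.
apply: eq_bigr => a _; congr (_ * _); apply: eq_bigr => s' _.
by rewrite IH.
Qed.

Lemma cont_take (F : seq (State * Action n) -> R) k h s j :
  (j <= size h)%N -> C h s k (fun h' _ => F (take j h')) = F (take j h).
Proof.
elim: k h s => [|k IH] h s hj //=.
rewrite -[RHS](cont_const h s k.+1 (F (take j h))) /=.
apply: eq_bigr => a _; congr (_ * _); apply: eq_bigr => s' _; congr (_ * _).
rewrite IH ?size_rcons ?(leq_trans hj) // -cats1 takel_cat //.
by rewrite cont_const.
Qed.


Lemma cont_step (Psi : seq (State * Action n) -> State * Action n -> R) t T :
  (t < T)%N ->
  C [::] x0 T (fun h _ => Psi (take t h) (nth (dflt n) h t)) =
  C [::] x0 t (fun h s => \sum_a pi h s a * Psi h (s, a)).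
Proof.
move=> hT; rewrite -(subnKC hT) cont_tower.
transitivity (C [::] x0 t.+1 (fun h' _ => Psi (take t h') (nth (dflt n) h' t))).
  apply: cont_ext_size => h' s' hs.
  pose G := fun h0 => Psi (take t h0) (nth (dflt n) h0 t).
  have -> : (fun (h : seq (State * Action n)) (_ : State) =>
      Psi (take t h) (nth (dflt n) h t)) = (fun h _ => G (take t.+1 h)).
    apply/funext => h; apply/funext => _ /=.
    by rewrite /G take_takel // nth_take.
  by rewrite cont_take ?hs // take_oversize ?hs.
rewrite -addn1 cont_tower; apply: cont_ext_size => h s hs /=.
apply: eq_bigr => a _; congr (_ * _).
rewrite -cats1 take_size_cat // nth_cat hs add0n ltnn subnn /=.
by rewrite -big_distrl /= trans_sum mul1r.
Qed.


Definition rho (h : seq (State * Action n)) (s : State) : R :=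
  \sum_a pi h s a * reward s a.

Lemma rho_ge0 h s : 0 <= rho h s.
Proof.
apply: sumr_ge0 => a _; apply: mulr_ge0; first exact: pi_ge0.
by rewrite /reward; case: s.
Qed.

Lemma rho_le1 h s : rho h s <= 1.
Proof.
rewrite -(pi_sum h s); apply: ler_sum => a _.
rewrite /reward; case: s; rewrite ?mulr1 ?mulr0 ?pi_ge0 //.
Qed.

Lemma er_ge0 h s i : 0 <= exp_reward gamma theta pi h s i.
Proof.
rewrite /exp_reward -[X in X <= _](cont_const h s i 0); apply: cont_le => ? ?; exact: rho_ge0.
Qed.

Lemma er_le1 h s i : exp_reward gamma theta pi h s i <= 1.
Proof.
rewrite /exp_reward -[X in _ <= X](cont_const h s i 1); apply: cont_le => ? ?; exact: rho_le1.
Qed.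

Lemma Vpi_bound h s K :
  Vpi gamma theta pi h s <=
  \sum_(i < K) gamma ^+ i * exp_reward gamma theta pi h s i + gamma ^+ K / (1 - gamma).
Proof.
case/andP: hg => g0 g1.
have d0 : 0 < 1 - gamma by lra.
set e := exp_reward gamma theta pi h s.
pose u N := \sum_(i < N) gamma ^+ i * e i.
pose w N := u N + gamma ^+ N / (1 - gamma).
have wS N : w N.+1 <= w N.
  rewrite /w /u big_ord_recr /= exprS.
  have : gamma ^+ N * e N <= gamma ^+ N * 1.
    by apply: ler_wpM2l; [apply: exprn_ge0; lra | exact: er_le1].
  have gN : 0 <= gamma ^+ N by apply: exprn_ge0; lra.
  have -> : gamma * gamma ^+ N / (1 - gamma) = gamma ^+ N / (1 - gamma) - gamma ^+ N.
    by field; lra.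
  lra.
have wd d N : w (N + d)%N <= w N.
  elim: d => [|d IH]; first by rewrite addn0.
  by rewrite addnS; apply: le_trans (wS _) IH.
have uw N : u N <= w N.
  rewrite /w lerDl; apply: divr_ge0; [apply: exprn_ge0; lra | lra].
have ui N : u N <= u N.+1.
  rewrite /u big_ord_recr /= lerDl; apply: mulr_ge0; [apply: exprn_ge0; lra | exact: er_ge0].
have cu : cvgn u.
  apply: nondecreasing_is_cvgn; first by apply/nondecreasing_seqP.
  exists (w 0%N) => _ [N _ <-].
  by apply: le_trans (uw N) _; rewrite -[N]add0n; apply: wd.
rewrite /Vpi -/e.
apply: limr_le => //.
exists K => // N /= hN.
apply: le_trans (uw N) _.
by rewrite -(subnKC hN); apply: wd.
Qed.

Lemma Hsum T : \sum_(t < T) gamma ^+ (T - t) <= gamma / (1 - gamma).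
Proof.
case/andP: hg => g0 g1.
have d0 : 0 < 1 - gamma by lra.
elim: T => [|T IH]; first by rewrite big_ord0; apply: divr_ge0; lra.
rewrite big_ord_recr /= subSnn expr1.
have -> : \sum_(i < T) gamma ^+ (T.+1 - widen_ord (leqnSn T) i) =
   gamma * \sum_(i < T) gamma ^+ (T - i).
  rewrite big_distrr /=; apply: eq_bigr => i _.
  by rewrite /= subSn ?exprS // ltnW.
have E : gamma / (1 - gamma) = gamma * (gamma / (1 - gamma)) + gamma by field; lra.
rewrite [X in _ <= X]E.
by rewrite lerD2r; apply: ler_wpM2l => //; apply: ltW.
Qed.

Lemma AL1 (x : nat -> R) : (forall u, 0 <= x u) -> forall T,
  \sum_(t < T) \sum_(i < T - t) gamma ^+ i * x (t + i)%N <=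
  (1 - gamma)^-1 * \sum_(u < T) x u.
Proof.
move=> x0' ; elim=> [|T IH]; first by rewrite !big_ord0 mulr0.
have d0 : 0 < 1 - gamma by case/andP: hg => g0 g1; lra.
have -> : \sum_(t < T.+1) \sum_(i < T.+1 - t) gamma ^+ i * x (t + i)%N =
  \sum_(t < T.+1) \sum_(i < T - t) gamma ^+ i * x (t + i)%N +
  \sum_(t < T.+1) gamma ^+ (T - t) * x T.
  rewrite -big_split /=; apply: eq_bigr => t _.
  have tT : (t <= T)%N by rewrite -ltnS.
  by rewrite subSn // big_ord_recr /= subnKC.
rewrite big_ord_recr /= subnn big_ord0 addr0.
rewrite -big_distrl /= big_ord_recr /= subnn expr0.
have H := Hsum T.
have xT := x0' T.
have : (\sum_(i < T) gamma ^+ (T - i)) * x T <= gamma / (1 - gamma) * x T.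
  by apply: ler_wpM2r.
rewrite big_ord_recr /= mulrDr.
have -> : (1 - gamma)^-1 * x T = gamma / (1 - gamma) * x T + x T by field; lra.
move=> hle; rewrite mulrDl mul1r !addrA; apply: lerD => //; exact: lerD.
Qed.

End Aux.

Theorem lemma39 (R : realType) (n : nat) (gamma : R) (theta : 'I_n -> R)
  (pi : policy R n) (T : nat) :
  0 < gamma < 1 -> valid_policy pi ->
  Etraj gamma theta pi T (regret gamma theta pi T) >=
  Etraj gamma theta pi T (fun h =>
     \sum_(t < T) Vstar gamma theta (nth (dflt n) h t).1
     - (1 - gamma)^-1 * \sum_(t < T) reward (nth (dflt n) h t).1 (nth (dflt n) h t).2
     - gamma / (1 - gamma) ^+ 2).
Proof.
move=> hg hpi.
rewrite /Etraj /regret !cont_sub cont_scale (cont_const _ _ _ _ _ hpi) !cont_sum.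
rewrite cont_scale cont_sum; try exact: hpi.
set x := fun u => cont gamma theta pi [::] x0 u (rho R n pi).
have x_ge0 u : 0 <= x u.
  rewrite /x -[X in X <= _](cont_const _ _ gamma theta _ hpi [::] x0 u 0).
  by apply: (cont_le _ _ _ _ _ hg hpi) => ? ?; exact: rho_ge0.
have ER : \sum_(t < T) cont gamma theta pi [::] x0 T (fun h _ =>
      reward (nth (dflt n) h t).1 (nth (dflt n) h t).2) = \sum_(t < T) x t.
  apply: eq_bigr => t _.
  have E := cont_step _ _ gamma theta _ hpi (fun _ p => reward p.1 p.2) _ _ (ltn_ord t).
  by simpl in E; rewrite E.
have EV : forall t : 'I_T, cont gamma theta pi [::] x0 T (fun h _ =>
      Vpi gamma theta pi (take t h) (nth (dflt n) h t).1) <=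
    \sum_(i < T - t) gamma ^+ i * x (t + i)%N + gamma ^+ (T - t) / (1 - gamma).
  move=> t.
  have -> : cont gamma theta pi [::] x0 T (fun h _ =>
      Vpi gamma theta pi (take t h) (nth (dflt n) h t).1) =
      cont gamma theta pi [::] x0 t (fun h s => Vpi gamma theta pi h s).
    transitivity (cont gamma theta pi [::] x0 t
       (fun h s => \sum_a pi h s a * Vpi gamma theta pi h s)).
      have E := cont_step _ _ gamma theta _ hpi (fun h p => Vpi gamma theta pi h p.1) _ _ (ltn_ord t).
      by simpl in E; rewrite E.
    congr cont; apply/funext => h; apply/funext => s.
    by rewrite -big_distrl /= (pi_sum _ _ _ hpi) mul1r.
  apply: le_trans (cont_le _ _ _ _ _ hg hpi _ _ _ _ _
     (fun h s => Vpi_bound _ _ _ _ _ hg hpi h s (T - t))) _.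
  rewrite cont_add cont_sum //.
  apply: lerD; last by rewrite -[X in _ <= X](cont_const _ _ gamma theta _ hpi [::] x0 t).
  rewrite le_eqVlt; apply/orP; left; apply/eqP/eq_bigr => i _.
  by rewrite cont_scale /exp_reward -cont_tower.
rewrite ER.
have d0 : 0 < 1 - gamma by case/andP: hg => g0 g1; lra.
have H1 : \sum_(t < T) cont gamma theta pi [::] x0 T (fun h _ =>
      Vpi gamma theta pi (take t h) (nth (dflt n) h t).1) <=
    \sum_(t < T) (\sum_(i < T - t) gamma ^+ i * x (t + i)%N + gamma ^+ (T - t) / (1 - gamma)).
  by apply: ler_sum => t _; exact: EV.
rewrite big_split /= -big_distrl /= in H1.
have A1 := AL1 _ _ hg x x_ge0 T.
have A2 := Hsum _ _ hg T.
have A3 : (\sum_(t < T) gamma ^+ (T - t)) * (1 - gamma)^-1 <=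
    gamma / (1 - gamma) * (1 - gamma)^-1.
  by apply: ler_wpM2r => //; rewrite invr_ge0 ltW.
have -> : gamma / (1 - gamma) ^+ 2 = gamma / (1 - gamma) * (1 - gamma)^-1.
  by field; lra.
move: H1 A1 A3.
set SV := \sum_(i < T) _.
set SV2 := \sum_(i < T) _.
set D := \sum_(i < T) _.
set E := \sum_(i < T) _.
set F := \sum_(i < T) _.
set c := gamma / (1 - gamma) / (1 - gamma).
set Dk := D / (1 - gamma).
set kE := (1 - gamma)^-1 * E.
move=> h1 h2 h3; lra.
all: exact: hpi.
Qed.
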